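(* In the $\beta$-model, for a fixed positive integer $r$, $$\|W_{22}-\widetilde W_{22}\|_{\max}\lesssim\frac{b_n^6}{n^3c_n^5},$$ where $W_{22}$ is the bottom-right $(n-r)\times(n-r)$ block of $W=V^{-1}-S$ and $\widetilde W_{22}=V_{22}^{-1}-S_{22}$.
   Context: $\beta$-model with parameter $\boldsymbol\beta\in\mathbb R^n$. $V=(v_{ij})$ with $v_{ij}=e^{\beta_i+\beta_j}/(1+e^{\beta_i+\beta_j})^2$ for $i\ne j$ and $v_{ii}=\sum_{j\ne i}v_{ij}$; $S=\mathrm{diag}(1/v_{11},\dots,1/v_{nn})$; $V_{22}$ is the bottom-right $(n-r)\times(n-r)$ block of $V$ and $S_{22}=\mathrm{diag}(1/v_{r+1,r+1},\dots,1/v_{nn})$. $\|J\|_{\max}=\max_{i,j}|J_{ij}|$. $b_n=\max_{i\neq j}(1+e^{\beta_i+\beta_j})^2/e^{\beta_i+\beta_j}$, $c_n=\min_{i\ne j}(\cdot)$. $x\lesssim y$ means $x\le Cy$ for a constant $C$ independent of $n$. *)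

(* Defs.v *)
From HB Require Import structures.
From mathcomp Require Import all_boot all_order all_algebra.
From mathcomp Require Import reals.
From mathcomp.analysis Require Import sequences exp.
Set Implicit Arguments. Unset Strict Implicit. Unset Printing Implicit Defensive.
Import Order.TTheory GRing.Theory Num.Theory.
Local Open Scope ring_scope.

Section BetaModel.
Variable R : realType.
Variable n : nat.
Variable beta : 'I_n -> R.

Definition bm_v (i j : 'I_n) : R :=
  expR (beta i + beta j) / (1 + expR (beta i + beta j)) ^+ 2.

Definition bm_V : 'M[R]_n :=
  \matrix_(i, j) (if i == j then \sum_(k | k != i) bm_v i k else bm_v i j).

Definition bm_S : 'M[R]_n :=
  \matrix_(i, j) (if i == j then (bm_V i i)^-1 else 0).

Definition bm_W : 'M[R]_n := invmx bm_V - bm_S.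

Definition bm_ratio (i j : 'I_n) : R :=
  (1 + expR (beta i + beta j)) ^+ 2 / expR (beta i + beta j).

(* b_n = max_{i<>j} ratio (all ratios are >= 4 > 0, so the seed 0 is harmless) *)
Definition bm_b : R :=
  \big[Num.max/0]_(i : 'I_n) \big[Num.max/0]_(j : 'I_n | j != i) bm_ratio i j.

(* c_n = min_{i<>j} ratio (seed b_n is >= every ratio, so harmless for n >= 2) *)
Definition bm_c : R :=
  \big[Num.min/bm_b]_(i : 'I_n) \big[Num.min/bm_b]_(j : 'I_n | j != i) bm_ratio i j.
End BetaModel.

Definition maxnorm (R : realType) (p q : nat) (J : 'M[R]_(p, q)) : R :=
  \big[Num.max/0]_(i : 'I_p) \big[Num.max/0]_(j : 'I_q) `|J i j|.

(* Main.v *)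
Require Import Defs.
From HB Require Import structures.
From mathcomp Require Import all_boot all_order all_algebra.
From mathcomp Require Import reals.
From mathcomp.analysis Require Import sequences exp.
From mathcomp Require Import lra ring zify.
Import Order.TTheory GRing.Theory Num.Theory.
Local Open Scope ring_scope.

Section Gen.
Variable R : realType.

Lemma sum_const_ord p (x : R) : \sum_(i < p) x = p%:R * x.
Proof. by rewrite sumr_const card_ord mulr_natl. Qed.

Lemma sum_delta p (i : 'I_p) (f : 'I_p -> R) :
  \sum_k (i == k)%:R * f k = f i.
Proof.
rewrite (bigD1 i) //= eqxx mul1r big1 ?addr0 // => k /negbTE.
by rewrite eq_sym => ->; rewrite mul0r.
Qed.

Lemma cs p (f : 'I_p -> R) : (\sum_i f i) ^+ 2 <= p%:R * \sum_i f i ^+ 2.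
Proof.
have H : 0 <= \sum_i \sum_(k < p) (f i - f k) ^+ 2.
  by apply: sumr_ge0 => i _; apply: sumr_ge0 => k _; exact: sqr_ge0.
have E : forall i, \sum_(k < p) (f i - f k) ^+ 2 =
    p%:R * f i ^+ 2 - 2 * (f i * \sum_k f k) + \sum_k f k ^+ 2.
  move=> i; under eq_bigr do rewrite sqrrB.
  rewrite big_split /= sumrB sum_const_ord sumrMnl big_distrr /=.
  by rewrite [2 * _]mulr_natl.
move: H; under eq_bigr do rewrite E.
rewrite big_split /= sumrB -!big_distrr /= sum_const_ord.
set S := \sum_i f i; set Q := \sum_i f i ^+ 2.
have -> : \sum_i f i * S = S * S by rewrite big_distrl.
move=> H; nra.
Qed.

Lemma energy p (M : 'M[R]_p) (a : R) :
  0 <= a ->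
  (forall i k, M i k = M k i) ->
  (forall i k, i != k -> a <= M i k) ->
  (forall i, \sum_(k | k != i) M i k <= M i i) ->
  forall u : 'I_p -> R,
  a * (p%:R - 2) * \sum_i u i ^+ 2 <= \sum_i u i * \sum_k M i k * u k.
Proof.
move=> a0 Msym Mge Mdom u.
pose P i k := if i == k then 0 else M i k.
have HP1 i : \sum_k M i k * u k = M i i * u i + \sum_k P i k * u k.
  rewrite (bigD1 i) //=; congr (_ + _).
  rewrite [RHS](bigD1 i) //= /P eqxx mul0r add0r.
  by apply: eq_bigr => k; rewrite eq_sym => /negbTE ->.
have HP2 i : \sum_k P i k = \sum_(k | k != i) M i k.
  rewrite (bigD1 i) //= /P eqxx add0r.
  by apply: eq_bigr => k; rewrite eq_sym => /negbTE ->.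
have Psym i k : P i k = P k i by rewrite /P eq_sym Msym.
have Pge i k : a * (i != k)%:R <= P i k.
  rewrite /P; case: (eqVneq i k) => [_|ne] /=; first by rewrite mulr0.
  by rewrite mulr1 Mge.
pose F i k := P i k * (u i ^+ 2 + u i * u k).
pose G i k := P i k * (u k ^+ 2 + u i * u k).
have s1 : \sum_i \sum_k F i k <= \sum_i u i * \sum_k M i k * u k.
  apply: ler_sum => i _; rewrite HP1 mulrDr big_distrr /=.
  rewrite /F; under eq_bigr do rewrite mulrDr.
  rewrite big_split /= lerD //.
    rewrite -big_distrl /= HP2 (_ : u i * (M i i * u i) = M i i * u i ^+ 2); last by ring.
    rewrite ler_wpM2r //; exact: sqr_ge0.
  by apply: ler_sum => k _; rewrite [X in _ <= X]mulrCA.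
have s2 : \sum_i \sum_k F i k = \sum_i \sum_k G i k.
  rewrite /F /G.
  have -> : \sum_i \sum_k P i k * (u i ^+ 2 + u i * u k) =
            \sum_i \sum_k P i k * u i ^+ 2 + \sum_i \sum_k P i k * (u i * u k).
    by rewrite -big_split /=; apply: eq_bigr => i _; rewrite -big_split; apply: eq_bigr => k _; rewrite mulrDr.
  have -> : \sum_i \sum_k P i k * (u k ^+ 2 + u i * u k) =
            \sum_i \sum_k P i k * u k ^+ 2 + \sum_i \sum_k P i k * (u i * u k).
    by rewrite -big_split /=; apply: eq_bigr => i _; rewrite -big_split; apply: eq_bigr => k _; rewrite mulrDr.
  congr (_ + _); rewrite exchange_big /=.
  by apply: eq_bigr => i _; apply: eq_bigr => k _; rewrite Psym.
have s3 : \sum_i \sum_k F i k + \sum_i \sum_k G i k =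
          \sum_i \sum_k P i k * (u i + u k) ^+ 2.
  rewrite -big_split; apply: eq_bigr => i _; rewrite -big_split; apply: eq_bigr => k _.
  rewrite /F /G /=; ring.
have s4 : \sum_i \sum_k a * (i != k)%:R * (u i + u k) ^+ 2 <=
          \sum_i \sum_k P i k * (u i + u k) ^+ 2.
  apply: ler_sum => i _; apply: ler_sum => k _; apply: ler_wpM2r => //; exact: sqr_ge0.
have s5 : \sum_i \sum_k a * (i != k)%:R * (u i + u k) ^+ 2 =
          a * (\sum_i \sum_k (u i + u k) ^+ 2 - 4 * \sum_i u i ^+ 2).
  rewrite big_distrr -sumrB big_distrr /=; apply: eq_bigr => i _.
  have -> : \sum_k a * (i != k)%:R * (u i + u k) ^+ 2 =
     \sum_k a * (u i + u k) ^+ 2 - \sum_k (i == k)%:R * (a * (u i + u k) ^+ 2).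
    rewrite -sumrB; apply: eq_bigr => k _; case: (i =P k) => _ /=; ring.
  rewrite sum_delta -big_distrr /=; ring.
have s6 : \sum_i \sum_k (u i + u k) ^+ 2 =
          2 * (p%:R * \sum_i u i ^+ 2) + 2 * (\sum_i u i) ^+ 2.
  have E i : \sum_k (u i + u k) ^+ 2 =
      p%:R * u i ^+ 2 + 2 * (u i * \sum_k u k) + \sum_k u k ^+ 2.
    under eq_bigr do rewrite sqrrD.
    rewrite !big_split /= sum_const_ord big_distrr /=; ring.
  under eq_bigr do rewrite E.
  rewrite !big_split /= -!big_distrr /= sum_const_ord -big_distrl /=; ring.
set Q := \sum_i u i ^+ 2 in s5 s6 *.
set S := \sum_i u i in s6.
set T := \sum_i u i * _.
have hS : 0 <= a * S ^+ 2 by apply: mulr_ge0 => //; exact: sqr_ge0.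
rewrite s6 in s5.
have e5 : a * (2 * (p%:R * Q) + 2 * S ^+ 2 - 4 * Q) = 2 * (a * (p%:R - 2) * Q) + 2 * (a * S ^+ 2) by ring.
rewrite e5 in s5; move: s1; rewrite -/T => s1; lra.
Qed.


Lemma kernel p (M : 'M[R]_p) (a : R) :
  0 < a -> (2 < p)%N ->
  (forall i k, M i k = M k i) ->
  (forall i k, i != k -> a <= M i k) ->
  (forall i, \sum_(k | k != i) M i k <= M i i) ->
  forall z : 'I_p -> R, (forall i, \sum_k M i k * z k = 0) -> forall i, z i = 0.
Proof.
move=> a0 p2 Msym Mge Mdom z Hz i.
have E := @energy p M a (ltW a0) Msym Mge Mdom z.
have Z0 : \sum_i z i * \sum_k M i k * z k = 0.
  by apply: big1 => j _; rewrite Hz mulr0.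
rewrite Z0 in E.
have hp : 3%:R <= p%:R :> R by rewrite ler_nat.
have Q0 : 0 <= \sum_i z i ^+ 2 by apply: sumr_ge0 => j _; exact: sqr_ge0.
have Qz : \sum_i z i ^+ 2 = 0.
  apply/eqP; rewrite eq_le Q0 andbT.
  have hpos : 0 < a * (p%:R - 2) by apply: mulr_gt0 => //; lra.
  by rewrite -(pmulr_rle0 _ hpos).
have := psumr_eq0P (fun j _ => sqr_ge0 (z j)) Qz (i:=i) isT.
by move/eqP; rewrite sqrf_eq0 => /eqP.
Qed.

Lemma unit_of p (M : 'M[R]_p) (a : R) :
  0 < a -> (2 < p)%N ->
  (forall i k, M i k = M k i) ->
  (forall i k, i != k -> a <= M i k) ->
  (forall i, \sum_(k | k != i) M i k <= M i i) ->
  M \in unitmx.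
Proof.
move=> a0 p2 Msym Mge Mdom.
rewrite unitmxE unitfE; apply/negP => /det0P [v vn0 vM].
move/negP: vn0; apply; apply/eqP/rowP => k; rewrite mxE.
apply: (@kernel p M a a0 p2 Msym Mge Mdom (fun k => v 0 k)).
move=> i; transitivity ((v *m M) 0 i); last by rewrite vM mxE.
by rewrite mxE; apply: eq_bigr => j _; rewrite Msym mulrC.
Qed.

Lemma linf p (M : 'M[R]_p) (B Cc nn : R) (y w : 'I_p -> R) :
  0 < B -> B <= Cc -> 0 < nn -> (4 <= p)%N ->
  (forall i k, M i k = M k i) ->
  (forall i k, i != k -> B <= M i k) ->
  (forall i k, i != k -> M i k <= Cc) ->
  (forall i, \sum_(k | k != i) M i k <= M i i) ->
  (forall i, nn * B <= M i i) ->
  (forall i, `|w i| <= Cc) ->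
  (forall i, \sum_k M i k * y k = w i) ->
  forall i, `|y i| * (nn * B ^+ 2) <= 3 * Cc ^+ 2.
Proof.
move=> B0 BC nn0 p4 Msym Mge Mle Mdom Mdiag Hw Hy i.
set Q := \sum_i y i ^+ 2.
set L := \sum_i `|y i|.
have Q0 : 0 <= Q by apply: sumr_ge0 => j _; exact: sqr_ge0.
have L0 : 0 <= L by apply: sumr_ge0 => j _; exact: normr_ge0.
have hE := @energy p M B (ltW B0) Msym Mge Mdom y.
have h1 : \sum_i y i * \sum_k M i k * y k <= L * Cc.
  rewrite /L big_distrl /=; apply: ler_sum => j _; rewrite Hy.
  apply: le_trans (ler_norm _) _; rewrite normrM ler_wpM2l //.
have hCS := @cs p (fun i => `|y i|).
have eQ : \sum_i `|y i| ^+ 2 = Q by apply: eq_bigr => j _; rewrite real_normK // num_real.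
rewrite eQ -/L in hCS.
have hp : 4%:R <= p%:R :> R by rewrite ler_nat.
set P := p%:R in hp hCS hE.
have hL : B * L <= 2 * Cc.
  have k1 : B * (P - 2) * L ^+ 2 <= P * (L * Cc).
    apply: le_trans (_ : B * (P - 2) * (P * Q) <= _).
      apply: ler_wpM2l => //; apply: mulr_ge0; lra.
    have : B * (P - 2) * Q <= L * Cc by exact: le_trans hE h1.
    move=> k; have : P * (B * (P - 2) * Q) <= P * (L * Cc) by apply: ler_wpM2l => //; lra.
    by have -> : B * (P - 2) * (P * Q) = P * (B * (P - 2) * Q) by ring.
  have [L00|Lpos] := eqVneq L 0.
    by rewrite L00 mulr0; apply: mulr_ge0 => //; lra.
  have Lp : 0 < L by rewrite lt_def Lpos L0.
  have k2 : B * (P - 2) * L <= P * Cc.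
    have : L * (B * (P - 2) * L) <= L * (P * Cc).
      rewrite (_ : L * (B * (P - 2) * L) = B * (P - 2) * L ^+ 2); last by ring.
      by apply: le_trans k1 _; rewrite mulrCA.
    by rewrite ler_pM2l.
  nra.
have hrow := Hy i.
rewrite (bigD1 i) //= in hrow.
have hoff : `|\sum_(k | k != i) M i k * y k| <= Cc * L.
  apply: le_trans (ler_norm_sum _ _ _) _.
  rewrite /L big_distrr /=.
  apply: le_trans (_ : \sum_(k | k != i) Cc * `|y k| <= _).
    apply: ler_sum => k ki; rewrite normrM ler_wpM2r //.
    rewrite ger0_norm; first by apply: Mle; rewrite eq_sym.
    by apply: le_trans (ltW B0) (Mge _ _ _); rewrite eq_sym.
  rewrite [X in _ <= X](bigD1 i) //= lerDr; exact: mulr_ge0 (le_trans (ltW B0) BC) (normr_ge0 _).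
have hd : `|M i i * y i| <= Cc + Cc * L.
  have -> : M i i * y i = w i - \sum_(k | k != i) M i k * y k by rewrite -hrow addrK.
  apply: le_trans (ler_normB _ _) _; exact: lerD.
have Mii : nn * B <= M i i := Mdiag i.
rewrite normrM (ger0_norm (le_trans (ltW (mulr_gt0 nn0 B0)) Mii)) in hd.
have hy0 := normr_ge0 (y i).
have k3 : nn * B * `|y i| <= Cc + Cc * L.
  apply: le_trans hd; apply: ler_wpM2r => //.
have k4 : B * (nn * B * `|y i|) <= B * (Cc + Cc * L) by apply: ler_wpM2l => //; exact: ltW.
have -> : `|y i| * (nn * B ^+ 2) = B * (nn * B * `|y i|) by ring.
apply: le_trans k4 _.
have : B * (Cc + Cc * L) = B * Cc + Cc * (B * L) by ring.
move=> ->.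
have C0 : 0 < Cc by lra.
nra.
Qed.

End Gen.

Section Model.
Variable R : realType.
Variables (r m : nat).
Hypothesis hr : (0 < r)%N.
Hypothesis hm : (4 <= m)%N.
Variable beta : 'I_(r + m) -> R.

Local Notation ratio := (bm_ratio beta).
Local Notation b := (bm_b beta).
Local Notation c := (bm_c beta).
Local Notation V := (bm_V beta).

Lemma ratio_ge4 i j : 4 <= ratio i j.
Proof.
rewrite /bm_ratio; set e := expR _.
have e0 : 0 < e by exact: expR_gt0.
rewrite ler_pdivlMr //; have := sqr_ge0 (1 - e); nra.
Qed.

Lemma v_inv i j : bm_v beta i j = (ratio i j)^-1.
Proof. by rewrite /bm_v /bm_ratio invf_div. Qed.

Lemma ratio_le_b i j : i != j -> ratio i j <= b.
Proof.
move=> ij; rewrite /bm_b.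
apply: le_trans (le_bigmax _ (fun i => \big[Num.max/0]_(j | j != i) ratio i j) i).
by apply: le_bigmax_cond; rewrite eq_sym.
Qed.

Lemma c_le_ratio i j : i != j -> c <= ratio i j.
Proof.
move=> ij; rewrite /bm_c.
apply: le_trans (bigmin_le_cond _ (fun i => \big[Num.min/b]_(j | j != i) ratio i j) isT) _.
by apply: bigmin_le_cond; rewrite eq_sym.
Qed.

Definition i0 : 'I_(r + m) := lshift m (Ordinal hr).
Lemma m0 : (0 < m)%N. Proof. by apply: leq_trans hm. Qed.
Definition i1 : 'I_(r + m) := rshift r (Ordinal m0).

Lemma lr_neq (l : 'I_r) (k : 'I_m) : (lshift m l == rshift r k) = false.
Proof.
apply/negbTE/eqP => /(congr1 val) /=.
by have := ltn_ord l; lia.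
Qed.

Lemma i01 : i0 != i1. Proof. by rewrite /i0 /i1 lr_neq. Qed.

Lemma b_ge4 : 4 <= b.
Proof. exact: le_trans (ratio_ge4 i0 i1) (@ratio_le_b i0 i1 i01). Qed.

Lemma c_ge4 : 4 <= c.
Proof.
rewrite /bm_c; apply: le_bigmin; first exact: b_ge4.
move=> i _; apply: le_bigmin; first exact: b_ge4.
move=> j _; exact: ratio_ge4.
Qed.

Lemma c_le_b : c <= b.
Proof. exact: le_trans (@c_le_ratio i0 i1 i01) (@ratio_le_b i0 i1 i01). Qed.


Lemma b_gt0 : 0 < b. Proof. by apply: lt_le_trans b_ge4; lra. Qed.
Lemma c_gt0 : 0 < c. Proof. by apply: lt_le_trans c_ge4; lra. Qed.
Lemma ratio_gt0 i j : 0 < ratio i j. Proof. by apply: lt_le_trans (ratio_ge4 i j); lra. Qed.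

Lemma V_off i k : i != k -> V i k = (ratio i k)^-1.
Proof. by move=> /negbTE ik; rewrite /bm_V mxE ik v_inv. Qed.

Lemma V_sym i k : V i k = V k i.
Proof.
rewrite /bm_V !mxE eq_sym; case: eqP => [->|_] //.
by rewrite /bm_v addrC.
Qed.

Lemma V_lb i k : i != k -> b^-1 <= V i k.
Proof.
move=> ik; rewrite V_off // lef_pV2 ?posrE ?b_gt0 ?ratio_gt0 //.
exact: ratio_le_b.
Qed.

Lemma V_ub i k : i != k -> V i k <= c^-1.
Proof.
move=> ik; rewrite V_off // lef_pV2 ?posrE ?c_gt0 ?ratio_gt0 //.
exact: c_le_ratio.
Qed.

Lemma V_ge0 i k : i != k -> 0 <= V i k.
Proof. move=> ik; apply: le_trans _ (@V_lb i k ik); rewrite invr_ge0; exact: ltW b_gt0. Qed.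

Lemma V_diag i : V i i = \sum_(k | k != i) V i k.
Proof.
rewrite {1}/bm_V mxE eqxx; apply: eq_bigr => k ki.
by rewrite V_off ?v_inv // eq_sym.
Qed.

Lemma V_dom i : \sum_(k | k != i) V i k <= V i i.
Proof. by rewrite V_diag. Qed.

Lemma V_diag_lb i : ((r + m)%:R - 1) * b^-1 <= V i i.
Proof.
rewrite V_diag.
apply: le_trans (_ : \sum_(k | k != i) b^-1 <= _); last first.
  by apply: ler_sum => k ki; apply: V_lb; rewrite eq_sym.
have e : \sum_(k < r + m) b^-1 = b^-1 + \sum_(k | k != i) b^-1 by rewrite (bigD1 i).
rewrite sumr_const card_ord in e.
have -> : \sum_(k | k != i) b^-1 = (r + m)%:R * b^-1 - b^-1.
  by rewrite mulr_natl e /=; ring.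
by rewrite mulrBl mul1r.
Qed.

Local Notation A := (drsubmx V).

Lemma A_E i k : A i k = V (rshift r i) (rshift r k).
Proof. by rewrite drsubmxEsub mxE. Qed.

Lemma A_sym i k : A i k = A k i.
Proof. by rewrite !A_E V_sym. Qed.

Lemma A_lb i k : i != k -> b^-1 <= A i k.
Proof. by move=> ik; rewrite A_E; apply: V_lb; rewrite eq_rshift. Qed.

Lemma A_ub i k : i != k -> A i k <= c^-1.
Proof. by move=> ik; rewrite A_E; apply: V_ub; rewrite eq_rshift. Qed.

Lemma A_dom i : \sum_(k | k != i) A i k <= A i i.
Proof.
rewrite A_E V_diag big_split_ord /=.
have -> : \sum_(k | rshift r k != rshift r i) V (rshift r i) (rshift r k) =
          \sum_(k | k != i) A i k.
  by apply: eq_big => k; [rewrite eq_rshift | rewrite A_E].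
rewrite lerDr; apply: sumr_ge0 => l li; apply: V_ge0; rewrite eq_sym //.
Qed.

Lemma A_diag_lb i : ((r + m)%:R - 1) * b^-1 <= A i i.
Proof. by rewrite A_E; exact: V_diag_lb. Qed.


Lemma main_bound (i j : 'I_m) :
  `|(drsubmx (bm_W beta) - (invmx A - drsubmx (bm_S beta))) i j|
    <= (72 * r)%:R * (b ^+ 6 / ((r + m)%:R ^+ 3 * c ^+ 5)).
Proof.
have n5 : (5 <= r + m)%N by lia.
have m2 : (2 < m)%N by lia.
have n2 : (2 < r + m)%N by lia.
set B := b^-1; set Cc := c^-1.
have B0 : 0 < B by rewrite invr_gt0 b_gt0.
have C0 : 0 < Cc by rewrite invr_gt0 c_gt0.
have BC : B <= Cc by rewrite lef_pV2 ?posrE ?b_gt0 ?c_gt0 // c_le_b.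
have Vu : V \in unitmx := @unit_of R (r + m) V B B0 n2 V_sym V_lb V_dom.
have Au : A \in unitmx := @unit_of R m A B B0 m2 A_sym A_lb A_dom.
set X := invmx V; set Ai := invmx A.
have XV : V *m X = 1%:M := mulmxV Vu.
have AA : A *m Ai = 1%:M := mulmxV Au.
have Aisym k l : Ai k l = Ai l k.
  have e : Ai^T = Ai.
    rewrite /Ai trmx_inv; congr invmx; apply/matrixP => p q; rewrite mxE A_sym //.
  by rewrite -{1}e mxE.
have entry : (drsubmx (bm_W beta) - (Ai - drsubmx (bm_S beta))) i j =
    X (rshift r i) (rshift r j) - Ai i j.
  rewrite /bm_W !drsubmxEsub !mxE; ring.
rewrite entry.
pose nn : R := (r + m)%:R - 1.
have nn0 : 0 < nn.
  rewrite /nn; have : 5%:R <= (r + m)%:R :> R by rewrite ler_nat.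
  lra.
pose w (l : 'I_r) (k : 'I_m) := V (rshift r k) (lshift m l).
pose y (l : 'I_r) (k : 'I_m) := \sum_k' Ai k k' * w l k'.
have Hy l i' : \sum_k A i' k * y l k = w l i'.
  rewrite /y; under eq_bigr do rewrite big_distrr.
  rewrite exchange_big /=.
  transitivity (\sum_k' (A *m Ai) i' k' * w l k').
    apply: eq_bigr => k' _; rewrite mxE big_distrl; apply: eq_bigr => k _ /=.
    by rewrite mulrA.
  rewrite AA; under eq_bigr do rewrite mxE.
  exact: sum_delta.
have Hw l k : `|w l k| <= Cc.
  have ne : rshift r k != lshift m l by rewrite eq_sym lr_neq.
  by rewrite /w ger0_norm ?V_ge0 // V_ub.
have Yb l i' : `|y l i'| * (nn * B ^+ 2) <= 3 * Cc ^+ 2.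
  apply: (@linf R m A B Cc nn (y l) (w l)) => //;
    first [exact: A_sym | exact: A_lb | exact: A_ub | exact: A_dom | exact: A_diag_lb | exact: Hw | exact: Hy].
pose Y := 3 * Cc ^+ 2 / (nn * B ^+ 2).
have Y0 : 0 <= Y.
  rewrite /Y; apply/ltW/divr_gt0; apply: mulr_gt0 => //; exact: exprn_gt0.
have hY l i' : `|y l i'| <= Y.
  by rewrite /Y ler_pdivlMr //; apply: mulr_gt0 => //; exact: exprn_gt0.
pose x (k : 'I_(r + m)) := X k (rshift r j).
have Hx p : \sum_k V p k * x k = (p == rshift r j)%:R.
  transitivity ((V *m X) p (rshift r j)); first by rewrite mxE.
  by rewrite XV mxE.
pose d1 (l : 'I_r) := x (lshift m l).
pose d2 (k : 'I_m) := x (rshift r k) - Ai k j.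
pose u (k : 'I_(r + m)) := row_mx (\row_l d1 l) (\row_k d2 k) 0 k.
have uL l : u (lshift m l) = d1 l by rewrite /u row_mxEl mxE.
have uR k : u (rshift r k) = d2 k by rewrite /u row_mxEr mxE.
have rowsum p : \sum_k V p k * u k =
    \sum_l V p (lshift m l) * d1 l + \sum_k V p (rshift r k) * d2 k.
  rewrite big_split_ord /=; congr (_ + _); apply: eq_bigr => k _.
    by rewrite uL.
  by rewrite uR.
have R2 i' : \sum_l V (rshift r i') (lshift m l) * d1 l +
             \sum_k V (rshift r i') (rshift r k) * d2 k = 0.
  have e1 : \sum_k V (rshift r i') (rshift r k) * d2 k =
      \sum_k V (rshift r i') (rshift r k) * x (rshift r k) - \sum_k A i' k * Ai k j.
    by rewrite -sumrB; apply: eq_bigr => k _; rewrite mulrBr A_E.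
  have e2 : \sum_k A i' k * Ai k j = (i' == j)%:R.
    transitivity ((A *m Ai) i' j); first by rewrite mxE.
    by rewrite AA mxE.
  have := Hx (rshift r i'); rewrite big_split_ord /= eq_rshift => e3.
  rewrite e1 e2 -e3 /d1; ring.
have R1 l : \sum_l' V (lshift m l) (lshift m l') * d1 l' +
            \sum_k V (lshift m l) (rshift r k) * d2 k = - y l j.
  have e1 : \sum_k V (lshift m l) (rshift r k) * d2 k =
      \sum_k V (lshift m l) (rshift r k) * x (rshift r k) - y l j.
    rewrite /d2 /y; under eq_bigr do rewrite mulrBr.
    rewrite sumrB; congr (_ - _); apply: eq_bigr => k _.
    by rewrite Aisym /w V_sym mulrC.
  have := Hx (lshift m l); rewrite big_split_ord /= lr_neq => e3.
  rewrite e1 /d1; move: e3; set s1 := \sum_(i0 < r) _; set s2 := \sum_(i0 < m) _.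
  move=> e3; rewrite addrA e3 /=; ring.
have E := @energy R (r + m) V B (ltW B0) V_sym V_lb V_dom u.
have ER : \sum_p u p * \sum_k V p k * u k = \sum_l d1 l * (- y l j).
  rewrite big_split_ord /=.
  have -> : \sum_k u (rshift r k) * \sum_k0 V (rshift r k) k0 * u k0 = 0.
    by apply: big1 => k _; rewrite rowsum R2 mulr0.
  rewrite addr0; apply: eq_bigr => l _; by rewrite rowsum R1 uL.
have EL : \sum_l d1 l ^+ 2 <= \sum_p u p ^+ 2.
  rewrite big_split_ord /=.
  have -> : \sum_l u (lshift m l) ^+ 2 = \sum_l d1 l ^+ 2 by apply: eq_bigr => l _; rewrite uL.
  rewrite lerDl; by apply: sumr_ge0 => k _; exact: sqr_ge0.
set T := \sum_l `|d1 l|.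
have T0 : 0 <= T by apply: sumr_ge0 => l _; exact: normr_ge0.
have ET : \sum_l d1 l * (- y l j) <= T * Y.
  rewrite /T big_distrl /=; apply: ler_sum => l _.
  apply: le_trans (ler_norm _) _; rewrite normrM normrN.
  by apply: ler_wpM2l => //.
have hCS := @cs R r (fun l => `|d1 l|).
have eQ : \sum_l `|d1 l| ^+ 2 = \sum_l d1 l ^+ 2.
  by apply: eq_bigr => l _; rewrite real_normK // num_real.
rewrite eQ -/T in hCS.
have hn : 5%:R <= (r + m)%:R :> R by rewrite ler_nat.
set N := (r + m)%:R in hn E *.
have nnE : nn = N - 1 by [].
have K0 : 0 <= B * (N - 2) by apply: mulr_ge0; lra.
have hE2 : B * (N - 2) * \sum_l d1 l ^+ 2 <= T * Y.
  apply: le_trans ET; rewrite -ER; apply: le_trans E.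
  by apply: ler_wpM2l.
have hT : B * (N - 2) * T <= r%:R * Y.
  have [T00|Tpos] := eqVneq T 0.
    by rewrite T00 mulr0; apply: mulr_ge0 => //; exact: ler0n.
  have Tp : 0 < T by rewrite lt_def Tpos T0.
  rewrite -(ler_pM2l Tp).
  have : B * (N - 2) * T ^+ 2 <= r%:R * (B * (N - 2) * \sum_l d1 l ^+ 2).
    have -> : r%:R * (B * (N - 2) * \sum_l d1 l ^+ 2) = B * (N - 2) * (r%:R * \sum_l d1 l ^+ 2) by ring.
    by apply: ler_wpM2l.
  have : r%:R * (B * (N - 2) * \sum_l d1 l ^+ 2) <= r%:R * (T * Y) by apply: ler_wpM2l => //; exact: ler0n.
  move=> h1 h2; have := le_trans h2 h1.
  rewrite (_ : T * (B * (N - 2) * T) = B * (N - 2) * T ^+ 2); last by ring.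
  move=> h; apply: le_trans h _; by rewrite mulrCA.
pose z k := d2 k + \sum_l d1 l * y l k.
have Hz i' : \sum_k A i' k * z k = 0.
  rewrite /z; under eq_bigr do rewrite mulrDr.
  rewrite big_split /=.
  have -> : \sum_k A i' k * \sum_l d1 l * y l k = \sum_l d1 l * w l i'.
    transitivity (\sum_l d1 l * \sum_k A i' k * y l k).
      under eq_bigr do rewrite big_distrr.
      rewrite exchange_big /=; apply: eq_bigr => l _.
      rewrite big_distrr /=; apply: eq_bigr => k _ /=.
      by rewrite mulrCA.
    by apply: eq_bigr => l _; rewrite Hy.
  rewrite -[RHS](R2 i') addrC; congr (_ + _); apply: eq_bigr => k _.
    by rewrite /w mulrC.
  by rewrite A_E.
have zi := @kernel R m A B B0 m2 A_sym A_lb A_dom z Hz i.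
have D : `|d2 i| <= T * Y.
  move: zi; rewrite /z => /eqP; rewrite addr_eq0 => /eqP ->.
  rewrite normrN; apply: le_trans (ler_norm_sum _ _ _) _.
  rewrite /T big_distrl /=; apply: ler_sum => l _; rewrite normrM.
  by apply: ler_wpM2l.
apply: le_trans D _.
have bn0 : b != 0 by rewrite gt_eqF // b_gt0.
have cn0 : c != 0 by rewrite gt_eqF // c_gt0.
have N2 : 0 < N - 2 by lra.
have nnn0 : nn != 0 by rewrite gt_eqF.
have N2n0 : N - 2 != 0 by rewrite gt_eqF.
have Tb : T <= r%:R * Y * b / (N - 2).
  rewrite ler_pdivlMr //.
  have -> : T * (N - 2) = b * (B * (N - 2) * T) by rewrite /B; field.
  by rewrite [X in _ <= X]mulrC; apply: ler_wpM2l => //; exact: ltW b_gt0.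
apply: le_trans (_ : r%:R * Y * b / (N - 2) * Y <= _).
  by apply: ler_wpM2r.
have Yeq : Y = 3 * b ^+ 2 / (c ^+ 2 * nn).
  by rewrite /Y /B /Cc; field; rewrite nnn0 cn0 bn0.
rewrite Yeq.
have L1 : r%:R * (3 * b ^+ 2 / (c ^+ 2 * nn)) * b / (N - 2) * (3 * b ^+ 2 / (c ^+ 2 * nn))
   = (r%:R * b ^+ 5 * c^-1 ^+ 5) * (9 * c / (nn ^+ 2 * (N - 2))).
  by field; rewrite -?natrD; apply/and3P; split.
have Rr1 : (72 * r)%:R * (b ^+ 6 / (N ^+ 3 * c ^+ 5))
   = (r%:R * b ^+ 5 * c^-1 ^+ 5) * (72 * b / N ^+ 3).
  rewrite natrM; field; rewrite -natrD; apply/andP; split => //; rewrite gt_eqF //; lra.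
suff H : (r%:R * b ^+ 5 * c^-1 ^+ 5) * (9 * c / (nn ^+ 2 * (N - 2))) <=
          (r%:R * b ^+ 5 * c^-1 ^+ 5) * (72 * b / N ^+ 3).
  by move: H; rewrite -L1 -Rr1 => H; exact: H.
apply: ler_wpM2l.
  apply: mulr_ge0; first apply: mulr_ge0; [exact: ler0n | exact: exprn_ge0 (ltW b_gt0) | ].
  by apply: exprn_ge0; rewrite invr_ge0; exact: ltW c_gt0.
have N0 : 0 < N by lra.
have N3 : 0 < N ^+ 3 by exact: exprn_gt0.
have K1 : 0 < nn ^+ 2 * (N - 2) by apply: mulr_gt0 => //; exact: exprn_gt0.
rewrite ler_pdivrMr // mulrAC ler_pdivlMr //.
have P1 : N ^+ 3 <= 8 * (nn ^+ 2 * (N - 2)) by rewrite nnE; nra.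
have cb := c_le_b.
have b0 := b_gt0.
apply: le_trans (_ : 9 * b * N ^+ 3 <= _).
  by apply: ler_wpM2r; [exact: ltW | lra].
apply: le_trans (_ : 9 * b * (8 * (nn ^+ 2 * (N - 2))) <= _).
  by apply: ler_wpM2l => //; lra.
by rewrite le_eqVlt; apply/orP; left; apply/eqP; ring.
Qed.

Lemma bound_ge0 : 0 <= (72 * r)%:R * (b ^+ 6 / ((r + m)%:R ^+ 3 * c ^+ 5)).
Proof.
have b0 := b_gt0; have c0 := c_gt0.
apply: mulr_ge0; first exact: ler0n.
apply: divr_ge0; first exact: exprn_ge0 (ltW b0).
apply: mulr_ge0; first exact: exprn_ge0 (ler0n _ _).
exact: exprn_ge0 (ltW c0).
Qed.

End Model.

Theorem lemma10 (r : nat) (hr : (0 < r)%N) :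
  exists C : nat, exists N : nat,
    forall (R : realType) (m : nat), (N <= r + m)%N ->
    forall beta : 'I_(r + m) -> R,
      maxnorm (drsubmx (bm_W beta)
               - (invmx (drsubmx (bm_V beta)) - drsubmx (bm_S beta)))
      <= C%:R * (bm_b beta ^+ 6 / ((r + m)%:R ^+ 3 * bm_c beta ^+ 5)).
Proof.
exists (72 * r)%N, (r + 4)%N => R m hN beta.
have hm : (4 <= m)%N by lia.
rewrite /maxnorm; apply: bigmax_le => [|i _]; first exact: bound_ge0.
apply: bigmax_le => [|j _]; first exact: bound_ge0.
exact: main_bound.
Qed.
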